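(* Let $({\cal A},{\cal A}_0)$ be a locally convex quasi *-algebra with identity and topology $\tau$, let $\omega_0$ be a positive linear functional on ${\cal A}_0$ with $\omega_0(a^*a)\le p(a)^2$ for all $a\in{\cal A}_0$ for some $\tau$-continuous seminorm $p$, and let $\omega=\tilde\omega_0$ be its continuous extension to ${\cal A}$, with GNS construction $(\pi_\omega,\lambda_\omega,{\cal H}_\omega)$. If $x\in{\cal A}$ and $\{x_\alpha\}\subset{\cal A}_0$ is a net with $\tau$-$\lim_\alpha x_\alpha=x$, then $\lambda_\omega(x_\alpha)=\lambda_{\omega_0}(x_\alpha)\to\lambda_\omega(x)$ in ${\cal H}_\omega$.
   Context: A locally convex quasi *-algebra $({\cal A},{\cal A}_0)$: ${\cal A}_0$ is a *-algebra with a locally convex topology $\tau$ making the involution and the multiplications $a\mapsto ab$, $a\mapsto ba$ ($b\in{\cal A}_0$) continuous, ${\cal A}$ is the $\tau$-completion, with the involution and the products $ax,xa$ ($a\in{\cal A}$, $x\in{\cal A}_0$) extended by continuity. The functional $\omega$ is representable, and its GNS construction consists of a Hilbert space ${\cal H}_\omega$, a linear map $\lambda_\omega:{\cal A}\to{\cal H}_\omega$ with $\lambda_\omega({\cal A}_0)$ dense and $\langle\lambda_\omega(x),\lambda_\omega(a)\rangle=\omega(a^*x)$ for $x\in{\cal A}$, $a\in{\cal A}_0$, and a *-representation $\pi_\omega$ with domain $\lambda_\omega({\cal A}_0)$ satisfying $\pi_\omega(x)\lambda_\omega(a)=\lambda_\omega(xa)$; $\lambda_{\omega_0}$ denotes the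 GNS map of $\omega_0$ on ${\cal A}_0$, which coincides with $\lambda_\omega$ on ${\cal A}_0$. *)

(* Defs.v *)
From HB Require Import structures.
From mathcomp Require Import all_boot all_order all_algebra.
From mathcomp Require Import all_classical all_reals all_analysis.
From mathcomp Require Import complex.

Set Implicit Arguments.
Unset Strict Implicit.
Unset Printing Implicit Defensive.

Import Order.TTheory GRing.Theory Num.Theory.
Import numFieldTopology.Exports numFieldNormedType.Exports.

Local Open Scope classical_set_scope.
Local Open Scope ring_scope.
Local Open Scope complex_scope.

(** Directed sets and nets.  A net indexed by a directed set (I, le) converges
    iff its image of the filter of tails converges. *)
Definition directed_set (I : Type) (le : I -> I -> Prop) : Prop :=
  [/\ (exists i : I, True),
      (forall i, le i i),
      (forall i j k, le i j -> le j k -> le i k) &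
      (forall i j, exists k, le i k /\ le j k)].

Definition tails (I : Type) (le : I -> I -> Prop) : set_system I :=
  [set S | exists i, forall j, le i j -> S j].

Definition tvs_cauchy (K : numDomainType) (E : tvsType K) (F : set_system E) : Prop :=
  forall U : set E, nbhs (0 : E) U ->
    exists2 S : set E, F S & forall x y, S x -> S y -> U (x - y).

Definition tvs_complete (K : numDomainType) (E : tvsType K) : Prop :=
  forall F : set_system E, ProperFilter F -> tvs_cauchy F -> exists l : E, F --> l.

(** Locally convex quasi *-algebra (A, A0) over C = R[i] with identity:
    A is a locally convex space (tvsType), A0 a linear subspace of A which is a
    *-algebra for the restriction of [mul] and [star], the products [mul x a],
    [mul a x] (x in A, a in A0) and the involution [star] are defined on A;
    A is complete and A0 is dense in A (A is the completion of (A0, tau), tau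
    being the topology induced on A0), the involution and the multiplications
    by elements of A0 are continuous.  The values of [mul x y] when neither x
    nor y lies in A0 are irrelevant (never constrained). *)
Definition lc_quasi_star_algebra_with_identity (R : realType)
    (A : tvsType R[i]) (A0 : set A) (mul : A -> A -> A) (star : A -> A)
    (e : A) : Prop :=
      A0 0 /\ (forall (c : R[i]) a b, A0 a -> A0 b -> A0 (c *: a + b)) /\
      (forall a b, A0 a -> A0 b -> A0 (mul a b)) /\ (forall a, A0 a -> A0 (star a)) /\ A0 e /\
      (forall a, A0 a -> forall (c : R[i]) x y,
          mul a (c *: x + y) = c *: mul a x + mul a y /\
          mul (c *: x + y) a = c *: mul x a + mul y a) /\
      (forall a b x, A0 a -> A0 b ->
          [/\ mul a (mul b x) = mul (mul a b) x,
              mul a (mul x b) = mul (mul a x) b &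
              mul x (mul a b) = mul (mul x a) b]) /\
      (forall x, mul e x = x /\ mul x e = x) /\
      (forall (c : R[i]) x y, star (c *: x + y) = c^* *: star x + star y) /\
      (forall x, star (star x) = x) /\
      (forall a x, A0 a -> star (mul a x) = mul (star x) (star a) /\
                           star (mul x a) = mul (star a) (star x)) /\
      continuous star /\
      (forall a, A0 a -> continuous (fun x => mul a x) /\ continuous (fun x => mul x a)) /\
      tvs_complete A /\ (forall x : A, closure A0 x).

(** Inner product on a normed space whose norm it induces
    (a Hilbert space is a complete normed space with such an inner product);
    linear in the first argument, conjugate-linear in the second. *)
Definition is_inner_product (R : realType) (H : normedModType R[i])
    (ip : H -> H -> R[i]) : Prop :=
  [/\ (forall (c : R[i]) u v w, ip (c *: u + v) w = c * ip u w + ip v w),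
      (forall u v, ip v u = (ip u v)^*) &
      (forall u, ip u u = `|u| ^+ 2)].

Definition seminorm_on (R : realType) (A : tvsType R[i]) (A0 : set A) (p : A -> R) : Prop :=
  forall a b (c : R[i]), A0 a -> A0 b ->
    [/\ 0 <= p a, p (a + b) <= p a + p b & (p (c *: a))%:C = `|c| * (p a)%:C].

(* Main.v *)
Require Import Defs.
From HB Require Import structures.
From mathcomp Require Import all_boot all_order all_algebra.
From mathcomp Require Import all_classical all_reals all_analysis.
From mathcomp Require Import complex ring.
Import Order.TTheory GRing.Theory Num.Theory.
Import numFieldTopology.Exports numFieldNormedType.Exports.
Local Open Scope classical_set_scope.
Local Open Scope ring_scope.
Local Open Scope complex_scope.

Section Pol.
Variables (R : realType) (H : normedModType R[i]) (ip : H -> H -> R[i]).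
Hypothesis hip : is_inner_product ip.

Lemma ip_linl c u v w : ip (c *: u + v) w = c * ip u w + ip v w.
Proof. by case: hip. Qed.
Lemma ip_linr c u v w : ip w (c *: u + v) = c^* * ip w u + ip w v.
Proof.
case: hip => _ hs _.
by rewrite hs ip_linl rmorphD rmorphM /= -!hs.
Qed.
Lemma ip0l w : ip 0 w = 0.
Proof.
have := ip_linl 1 0 0 w; rewrite scale1r addr0 mul1r -{1}[ip 0 w]addr0.
by move=> /addrI <-.
Qed.
Lemma ip_scalel c u w : ip (c *: u) w = c * ip u w.
Proof. by rewrite -[c *: u]addr0 ip_linl ip0l addr0. Qed.
Lemma ip_addl u v w : ip (u + v) w = ip u w + ip v w.
Proof. by rewrite -[u]scale1r ip_linl mul1r scale1r. Qed.
Lemma ip_scaler c u w : ip w (c *: u) = c^* * ip w u.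
Proof. by case: hip => _ hs _; rewrite hs ip_scalel rmorphM /= -hs. Qed.
Lemma ip_addr u v w : ip w (u + v) = ip w u + ip w v.
Proof. by case: hip => _ hs _; rewrite hs ip_addl rmorphD /= -!hs. Qed.

Definition pol (u v : H) : R[i] :=
  4^-1 * (`|u + v| ^+ 2 - `|u - v| ^+ 2 + 'i * `|u + 'i *: v| ^+ 2
          - 'i * `|u - 'i *: v| ^+ 2).

Lemma polE u v : ip u v = pol u v.
Proof.
case: hip => hl hs hn.
have E c : `|u + c *: v| ^+ 2 = ip u u + c * ip v u + c^* * ip u v + c * c^* * ip v v.
  by rewrite -hn ip_addl !ip_addr !ip_scalel !ip_scaler; ring.
rewrite /pol.
have E' c c' : c^* = c' -> `|u + c *: v| ^+ 2 = ip u u + c * ip v u + c' * ip u v + c * c' * ip v v.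
  by move=> <-; exact: E.
have -> : u - v = u + (-1) *: v by rewrite scaleN1r.
have -> : u - 'i *: v = u + (- 'i) *: v by rewrite scaleNr.
have -> : u + v = u + 1 *: v by rewrite scale1r.
have i2 : 'i * 'i = -1 :> R[i] by rewrite -expr2 sqr_i.
rewrite (E' 1 1); last by apply/eqP; rewrite eq_complex /= ?oppr0 ?opprK ?oppr0 ?eqxx.
rewrite (E' (-1) (-1)); last by apply/eqP; rewrite eq_complex /= ?oppr0 ?opprK ?oppr0 ?eqxx.
rewrite (E' 'i (-'i)); last by apply/eqP; rewrite eq_complex /= ?oppr0 ?opprK ?oppr0 ?eqxx.
rewrite (E' (-'i) 'i); last by apply/eqP; rewrite eq_complex /= ?oppr0 ?opprK ?oppr0 ?eqxx.
set a := ip u u; set b := ip v u; set c := ip u v; set d := ip v v.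
have -> : 4^-1 * (a + 1 * b + 1 * c + 1 * 1 * d - (a + -1 * b + - 1 * c + -1 * - 1 * d) +
   'i * (a + 'i * b + - 'i * c + 'i * - 'i * d) -
   'i * (a + - 'i * b + 'i * c + - 'i * 'i * d)) = c + 4^-1*2*(b-c)*(1+'i*'i) :> R[i].
  by field.
by rewrite -expr2 sqr_i addrN mulr0 addr0.
Qed.

Lemma sqn_cvg (T : Type) (F : set_system T) {FF : Filter F} (f : T -> H) a :
  f @ F --> a -> (fun t => (`|f t| ^+ 2 : (R[i] : numFieldType))) @ F --> (`|a| ^+ 2 : (R[i] : numFieldType)).
Proof.
move=> fa; rewrite expr2.
have -> : (fun t => `|f t| ^+ 2) = (fun t => `|f t|) \* (fun t => `|f t|).
  by apply: funext => t; rewrite /= expr2.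
by apply: cvgM; apply: cvg_norm.
Qed.

Lemma pol_cvg (T : Type) (F : set_system T) {FF : Filter F} (f g : T -> H) a b :
  f @ F --> a -> g @ F --> b -> (fun t => (pol (f t) (g t) : (R[i] : numFieldType))) @ F --> (pol a b : (R[i] : numFieldType)).
Proof.
move=> fa gb; rewrite /pol; apply: cvgMl_tmp.
apply: cvgB; [apply: cvgD; [apply: cvgB|apply: cvgMl_tmp]|apply: cvgMl_tmp];
  apply: sqn_cvg; first exact: cvgD.
- exact: cvgB.
- by apply: cvgD => //; apply: cvgZl_tmp.
- by apply: cvgB => //; apply: cvgZl_tmp.
Qed.

Lemma ip_cvg (T : Type) (F : set_system T) {FF : Filter F} (f g : T -> H) a b :
  f @ F --> a -> g @ F --> b -> (fun t => (ip (f t) (g t) : (R[i] : numFieldType))) @ F --> (ip a b : (R[i] : numFieldType)).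
Proof.
move=> fa gb; rewrite polE.
have -> : (fun t => ip (f t) (g t)) = (fun t => pol (f t) (g t)).
  by apply: funext => t; rewrite polE.
exact: pol_cvg.
Qed.
End Pol.

Theorem lemma9
  (R : realType)
  (* the locally convex quasi *-algebra (A, A0) with identity e *)
  (A : tvsType R[i]) (A0 : set A) (mul : A -> A -> A) (star : A -> A) (e : A)
  (hA : lc_quasi_star_algebra_with_identity A0 mul star e)
  (* omega0 : positive linear functional on A0, dominated by a continuous seminorm p *)
  (omega0 : A -> R[i]) (p : A -> R)
  (h0lin : forall (c : R[i]) a b, A0 a -> A0 b ->
             omega0 (c *: a + b) = c * omega0 a + omega0 b)
  (h0pos : forall a, A0 a -> 0 <= omega0 (mul (star a) a))
  (hp : seminorm_on A0 p) (hpc : {within A0, continuous p})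
  (hbound : forall a, A0 a -> omega0 (mul (star a) a) <= ((p a) ^+ 2)%:C)
  (* omega : the continuous (linear) extension of omega0 to A *)
  (omega : A -> R[i]^o)
  (homlin : forall (c : R[i]) x y, omega (c *: x + y) = c * omega x + omega y)
  (homc : continuous omega)
  (hext : forall a, A0 a -> omega a = omega0 a)
  (* GNS construction of omega: Hilbert space H, map lam, representation pi *)
  (H : completeNormedModType R[i]) (ip : H -> H -> R[i])
  (hip : is_inner_product ip)
  (lam : A -> H)
  (hlamlin : forall (c : R[i]) x y, lam (c *: x + y) = c *: lam x + lam y)
  (hdense : forall v : H, closure (lam @` A0) v)
  (hgns : forall x a, A0 a -> ip (lam x) (lam a) = omega (mul (star a) x))
  (pi : A -> H -> H)
  (hpi : forall x a, A0 a -> pi x (lam a) = lam (mul x a))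
  (* GNS map of omega0 on A0, coinciding with lam on A0 *)
  (lam0 : A -> H)
  (hlam0 : forall a b, A0 a -> A0 b -> ip (lam0 a) (lam0 b) = omega0 (mul (star b) a))
  (hlam0co : forall a, A0 a -> lam0 a = lam a)
  (* a net (x_alpha) in A0 indexed by the directed set (I, le), tau-converging to x *)
  (x : A) (I : Type) (le : I -> I -> Prop) (hI : directed_set le)
  (xa : I -> A) (hxa : forall i, A0 (xa i))
  (hcv : xa @ tails le --> x) :
  (forall i, lam (xa i) = lam0 (xa i)) /\ (lam \o xa @ tails le --> lam x).

Proof.
split; first by move=> i; rewrite hlam0co.
case: hA => hA00 [hA0lin [hA0mul [hA0star [_ [_ [_ [_ [_ [_ [_ [_ [hmulc _]]]]]]]]]]]].
have hA0sub a b : A0 a -> A0 b -> A0 (a - b).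
  by move=> Ha Hb; rewrite -scaleN1r addrC; apply: hA0lin.
have lamB a b : lam (a - b) = lam a - lam b.
  by rewrite -scaleN1r addrC hlamlin scaleN1r addrC.
case: hI => [[i0 _] lrefl ltrans ldir].
have PF : ProperFilter (tails le).
  constructor; first by case=> j /(_ j (lrefl j)).
  constructor.
  - by exists i0.
  - move=> P Q [i hi] [j hj]; have [k [hik hjk]] := ldir i j.
    by exists k => m hkm; split; [apply: hi; apply: ltrans hkm|apply: hj; apply: ltrans hkm].
  - by move=> P Q PQ [i hi]; exists i => j /hi /PQ.
have nb a : A0 a -> `|lam a| <= (p a)%:C.
  move=> Ha; have [p0 _ _] := hp a a 0 Ha Ha.
  rewrite -(@ler_pXn2r _ 2) //; try by rewrite ?nnegrE ?ler0c ?normr_ge0.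
  case: hip => _ _ hn; rewrite -hn hgns // hext; last by apply: hA0mul => //; apply: hA0star.
  by rewrite -rmorphXn /=; apply: hbound.
set G := lam \o xa @ tails le.
have GC : cauchy G.
  apply: cauchy_exP => eps eps0.
  have epsr : eps \is Num.real by apply: gtr0_real.
  set d := complex.Re eps.
  have epsE : eps = d%:C by rewrite RRe_real.
  have d0 : 0 < d by rewrite -ltcR -epsE.
  have p00 : p 0 = 0.
    have [_ _ h] := hp 0 0 0 hA00 hA00.
    by move: h; rewrite scaler0 normr0 mul0r => /eqP; rewrite eq_complex /= eqxx andbT => /eqP.
  have := hpc (0 : subspace A0).
  move=> /(_ _ (nbhsx_ballx (p 0) d d0)).
  case: (nbhs_subspaceP A0 (0 : subspace A0)) => // _ /= W0.
  have W1 : nbhs ((x, x).1 - (x, x).2) [set y : A | A0 y -> p y < d].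
    have W0' : nbhs (0:A) [set y | A0 y -> ball (p 0) d (p y)] := W0.
    rewrite /= subrr; apply: filterS W0' => y hy Ay.
    move: (hy Ay); rewrite /from_subspace -ball_normE /ball_ /= p00 sub0r normrN.
    by apply: le_lt_trans; apply: ler_norm.
  have := @sub_continuous _ (x, x) _ W1.
  case=> -[P Q] /= [nP nQ] PQ.
  have := hcv _ (filterI nP nQ).
  case=> j0 hj0.
  exists (lam (xa j0)); exists j0 => j hj.
  rewrite /= -ball_normE /ball_ /= -lamB.
  have Hd : A0 (xa j0 - xa j) by apply: hA0sub.
  apply: le_lt_trans (nb _ Hd) _.
  rewrite epsE ltcR.
  have [P1 _] := hj0 j0 (lrefl j0); have [_ Q1] := hj0 j hj.
  exact: (PQ (xa j0, xa j) (conj P1 Q1)).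
have PG : ProperFilter G by apply: fmap_proper_filter.
have Gv : G --> lim G by apply: (@cauchy_cvg _ G PG).
set v := lim G.
suff -> : lam x = v by [].
have hb b : A0 b -> ip v (lam b) = ip (lam x) (lam b).
  move=> Hb.
  have c1 : (fun t => (ip (lam (xa t)) (lam b) : (R[i] : numFieldType))) @ tails le --> (ip v (lam b) : (R[i] : numFieldType)).
    by apply: (@ip_cvg R H ip hip I (tails le) _ (lam \o xa) (fun _ => lam b)) => //; apply: cvg_cst.
  have c2 : (fun i => omega (mul (star b) (xa i))) @ tails le --> omega (mul (star b) x).
    apply: (@cvg_comp _ _ _ (mul (star b) \o xa) omega); last exact: homc.
    apply: (@cvg_comp _ _ _ xa (mul (star b)) _ _ _ hcv); exact: ((hmulc _ (hA0star _ Hb)).1 x).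
  rewrite hgns //.
  have e1 : (fun t => ip (lam (xa t)) (lam b)) = (fun i => omega (mul (star b) (xa i))).
    by apply: funext => t; rewrite hgns.
  rewrite e1 in c1.
  exact: (cvg_unique _ c1 c2).
set z := v - lam x.
have hz b : A0 b -> ip z (lam b) = 0.
  by move=> Hb; rewrite /z addrC -scaleN1r ip_linl // hb // mulN1r addNr.
have := hdense z; rewrite closureEcvg => -[F0 PF0 [F0z gl]].
have c : (fun w => (ip z w : (R[i] : numFieldType))) @ F0 --> (ip z z : (R[i] : numFieldType)).
  by apply: (@ip_cvg R H ip hip H F0 _ (fun _ => z) (fun w => w)) => //; apply: cvg_cst.
have zz : ip z z = 0.
  have ev : \forall w \near F0, [set c : (R[i] : numFieldType) | c = 0] (ip z w).
    have : F0 (lam @` A0) by apply: gl.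
    by apply: filterS => w [b Hb <-]; apply: hz.
  have c0 : (fun w => (ip z w : (R[i] : numFieldType))) @ F0 --> (0 : (R[i] : numFieldType)).
    move=> P /= HP; have P0 : P 0 := @nbhs_singleton (R[i] : numFieldType) 0 P HP; apply: filterS ev => w /= ->; exact: P0.
  exact: (cvg_unique _ c c0).
case: hip => _ _ hn; move: zz; rewrite hn => /eqP; rewrite sqrf_eq0 normr_eq0 subr_eq0 => /eqP.
by [].
Qed.
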